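(* Every generalized ascending auction is obviously strategy-proof.
   Context: Bidders $i\in N$ have private valuations $v_i$ over bundles of items, with quasi-linear utilities. A generalized ascending auction fixes for each bidder $i$ a base bundle $X_i^B$ and a potential bundle $X_i^P$ with $X_i^B\subseteq X_i^P$. Initially every bidder is active. Each active bidder $i$ faces a clock price $p_i$ for receiving $X_i^P$ instead of $X_i^B$, which over the course of the auction is monotonically (weakly) increasing; when asked, an active bidder either stays or drops out. A bidder who drops out becomes inactive and is awarded $X_i^B$ at price $0$. The auction terminates as soon as it is feasible to allocate $X_i^P$ to all active bidders and $X_i^B$ to all inactive bidders; then each active bidder receives $X_i^P$ and pays her current clock price, and each inactive bidder receives $X_i^B$ and pays $0$. Viewed as a deterministic mechanism (a rooted tree whose internal nodes are assigned to bidders who send messages, with leaves labeled by allocations and payments), a behavior $B_i$ specifies a message at every node of bidder $i$, a profile $B$ determines a path $\mathrm{Path}(B)$ with bundle $f_i(B)$ and payment $p_i(B)$. A strategy $\mathcal S_i$ maps each valuation to a behavior; it is obviously dominant if for every $v_i$, every node $u$ of $i$, every $B_{-i}$ and every profile $B'$ with $u\in\mathrm{Path}(\mathcal S_i(v_i),B_{-i})\cap\mathrm{Path}(B')$ and $B'_i$ sending at $u$ a message different from $\mathcal S_i(v_i)$'s, $v_i(f_i(\mathcal S_i(v_i),B_{-i}))-p_i(\mathcal S_i(v_i),B_{-i})\ge v_i(f_i(B'))-p_i(B')$. A mechanism is obviously strategy-proof if every bidder has an obviously dominant strategy. *)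

(* Defs.v *)
From mathcomp Require Import all_boot all_order all_algebra.
Set Implicit Arguments. Unset Strict Implicit. Unset Printing Implicit Defensive.
Import Order.TTheory GRing.Theory Num.Theory.
Local Open Scope ring_scope.

Section Mechanisms.
Variables (N Item : finType) (R : realFieldType).

Definition bundle := {set Item}.
Definition allocation := N -> bundle.

(* A deterministic mechanism: a finite rooted tree whose internal nodes are
   assigned to a bidder, who sends a binary message (true = stay,
   false = drop out); leaves are labeled by allocations and payments. *)
Inductive mech :=
| Leaf of allocation & (N -> R)
| Node of N & mech & mech. (* bidder, child after "true", child after "false" *)

(* Nodes are identified by the history of messages from the root. *)
Fixpoint subtree (T : mech) (h : seq bool) : option mech :=
  match h with
  | [::] => Some T
  | m :: h' => match T with
               | Leaf _ _ => None
               | Node _ ts td => subtree (if m then ts else td) h'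
               end
  end.

Definition node_of (T : mech) (i : N) (u : seq bool) : Prop :=
  exists ts td, subtree T u = Some (Node i ts td).

Definition behavior := seq bool -> bool.
Definition profile := N -> behavior.

Definition upd_profile (B : profile) (i : N) (b : behavior) : profile :=
  fun j => if j == i then b else B j.

Fixpoint path_from (B : profile) (h : seq bool) (T : mech) : seq bool :=
  match T with
  | Leaf _ _ => [::]
  | Node i ts td => let m := B i h in
                    m :: path_from B (rcons h m) (if m then ts else td)
  end.

Fixpoint outcome_from (B : profile) (h : seq bool) (T : mech)
  : allocation * (N -> R) :=
  match T with
  | Leaf f p => (f, p)
  | Node i ts td => let m := B i h in
                    outcome_from B (rcons h m) (if m then ts else td)
  end.

Definition mpath (B : profile) (T : mech) := path_from B [::] T.
Definition outcome (B : profile) (T : mech) := outcome_from B [::] T.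

Definition on_path (B : profile) (T : mech) (u : seq bool) : Prop :=
  prefix u (mpath B T).

Definition utility (v : bundle -> R) (i : N) (o : allocation * (N -> R)) : R :=
  v (o.1 i) - o.2 i.

Definition strategy := (bundle -> R) -> behavior.

Definition obviously_dominant (T : mech) (i : N) (S : strategy) : Prop :=
  forall (v : bundle -> R) (u : seq bool) (B B' : profile),
    node_of T i u ->
    on_path (upd_profile B i (S v)) T u ->
    on_path B' T u ->
    B' i u != S v u ->
    utility v i (outcome B' T) <= utility v i (outcome (upd_profile B i (S v)) T).

Definition OSP (T : mech) : Prop :=
  forall i : N, exists S : strategy, obviously_dominant T i S.

Definition feasible (X : allocation) : bool :=
  [forall i, forall j, (i != j) ==> [disjoint X i & X j]].

Definition upd_price (p : N -> R) (i : N) (q : R) : N -> R :=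
  fun j => if j == i then q else p j.

(* GAA XB XP A p T : T is (the remaining tree of) a generalized ascending
   auction with base bundles XB, potential bundles XP, in the state where A
   is the set of active bidders and p the clock prices. *)
Inductive GAA (XB XP : allocation) : {set N} -> (N -> R) -> mech -> Prop :=
| GAA_end (A : {set N}) (p : N -> R) :
    feasible (fun j => if j \in A then XP j else XB j) ->
    GAA XB XP A p
      (Leaf (fun j => if j \in A then XP j else XB j)
            (fun j => if j \in A then p j else 0))
| GAA_ask (A : {set N}) (p : N -> R) (i : N) (q : R) (ts td : mech) :
    ~~ feasible (fun j => if j \in A then XP j else XB j) ->
    i \in A ->
    p i <= q ->
    GAA XB XP A (upd_price p i q) ts ->
    GAA XB XP (A :\ i) (upd_price p i q) td ->
    GAA XB XP A p (Node i ts td).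

Definition generalized_ascending_auction (XB XP : allocation) (T : mech) : Prop :=
  (forall i, XB i \subset XP i) /\ exists p0 : N -> R, GAA XB XP [set: N] p0 T.

End Mechanisms.

(* Main.v *)
Require Import Defs.
From mathcomp Require Import all_boot all_order all_algebra.
From mathcomp Require Import lra.
Set Implicit Arguments. Unset Strict Implicit. Unset Printing Implicit Defensive.
Import Order.TTheory GRing.Theory Num.Theory.
Local Open Scope ring_scope.

Section Proof.
Variables (N Item : finType) (R : realFieldType) (XB XP : N -> {set Item}).

Inductive GAAP : {set N} -> (N -> R) -> (seq bool -> R) -> mech N Item R -> Prop :=
| GAAP_end (A : {set N}) (p : N -> R) (P : seq bool -> R) :
    GAAP A p P
      (Leaf (fun j => if j \in A then XP j else XB j)
            (fun j => if j \in A then p j else 0))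
| GAAP_ask (A : {set N}) (p : N -> R) (P : seq bool -> R) (i : N) ts td :
    i \in A ->
    p i <= P [::] ->
    GAAP A (upd_price p i (P [::])) (fun w => P (true :: w)) ts ->
    GAAP (A :\ i) (upd_price p i (P [::])) (fun w => P (false :: w)) td ->
    GAAP A p P (Node i ts td).

Lemma GAA_GAAP A p T : GAA XB XP A p T -> exists P, GAAP A p P T.
Proof.
elim=> {A p T} [A p _|A p i q ts td _ iA pq _ [P1 H1] _ [P2 H2]].
  by exists (fun _ => 0); constructor.
exists (fun w => match w with [::] => q | true :: w' => P1 w' | false :: w' => P2 w' end).
by constructor.
Qed.

Variables (i : N) (v : {set Item} -> R).
Let d := v (XP i) - v (XB i).

Definition thr (P : seq bool -> R) (h : seq bool) (b : behavior) :=
  forall w, b (h ++ w) = (P w <= d).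

Lemma F3 A p P T : GAAP A p P T -> i \notin A ->
  forall (B : profile N) h, (outcome_from B h T).1 i = XB i /\ (outcome_from B h T).2 i = 0.
Proof.
elim=> {A p P T} [A p P|A p P j ts td jA _ _ IH1 _ IH2] iA B h /=.
  by rewrite (negbTE iA).
have iA' : i \notin A :\ j by rewrite in_setD1 (negbTE iA) andbF.
by case: (B j h); [apply: IH1|apply: IH2].
Qed.

Lemma thr_shift P h b m : thr P h b -> thr (fun w => P (m :: w)) (rcons h m) b.
Proof. by move=> H w; rewrite cat_rcons H. Qed.

Lemma upd_price_i (p : N -> R) (j : N) (q : R) : upd_price p j q i = if i == j then q else p i.
Proof. by []. Qed.

Lemma F1 A p P T : GAAP A p P T -> i \in A -> p i <= d ->
  forall (B : profile N) h, thr P h (B i) ->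
  v (XB i) <= utility v i (outcome_from B h T).
Proof.
elim=> {A p P T} [A p P|A p P j ts td jA pq _ IH1 Htd IH2] iA pd B h Ht /=.
  rewrite /utility /= iA; rewrite /d in pd; lra.
have [ij|ij] := eqVneq i j.
  subst j. have := Ht [::]; rewrite cats0 => ->.
  case: ifP => qd.
    apply: IH1 => //; first by rewrite upd_price_i eqxx.
    exact: thr_shift.
  have iA' : i \notin A :\ i by rewrite setD11.
  rewrite /utility; have [-> ->] := F3 Htd iA' B (rcons h false).
  by rewrite subr0.
have pi : upd_price p j (P [::]) i = p i by rewrite upd_price_i (negbTE ij).
case: (B j h).
  by apply: IH1 => //; [rewrite pi| exact: thr_shift].
by apply: IH2 => //; [rewrite in_setD1 ij| rewrite pi| exact: thr_shift].
Qed.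

Lemma F2 A p P T : GAAP A p P T -> i \in A -> d < p i ->
  forall (B : profile N) h, utility v i (outcome_from B h T) <= v (XB i).
Proof.
elim=> {A p P T} [A p P|A p P j ts td jA pq _ IH1 Htd IH2] iA pd B h /=.
  rewrite /utility /= iA; rewrite /d in pd; lra.
have [ij|ij] := eqVneq i j.
  subst j. case: (B i h).
    apply: IH1 => //; rewrite upd_price_i eqxx; exact: lt_le_trans pq.
  have iA' : i \notin A :\ i by rewrite setD11.
  rewrite /utility; have [-> ->] := F3 Htd iA' B (rcons h false).
  by rewrite subr0.
have pi : upd_price p j (P [::]) i = p i by rewrite upd_price_i (negbTE ij).
case: (B j h).
  by apply: IH1 => //; rewrite pi.
by apply: IH2 => //; [rewrite in_setD1 ij| rewrite pi].
Qed.

Lemma OSPrel A p P T : GAAP A p P T ->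
  forall u h (B B' : profile N), node_of T i u -> thr P h (B i) ->
  prefix u (path_from B h T) -> prefix u (path_from B' h T) ->
  B' i (h ++ u) != (P u <= d) ->
  utility v i (outcome_from B' h T) <= utility v i (outcome_from B h T).
Proof.
elim=> {A p P T} [A p P|A p P j ts td jA pq Hts IH1 Htd IH2] u h B B' Hn Ht Hp Hp'.
  by case: u Hn Hp Hp' => [|m u] [ts [td]].
case: u Hn Hp Hp' => [|m u] Hn Hp Hp' /=.
  case: Hn => ts' [td'] [] ij _ _; subst j.
  rewrite cats0 => Hne.
  have := Ht [::]; rewrite cats0 => HB.
  have iA' : i \notin A :\ i by rewrite setD11.
  rewrite HB; case qd: (P [::] <= d) HB Hne => HB Hne.
    case: (B' i h) Hne => // _; rewrite /utility.
    have [-> ->] := F3 Htd iA' B' (rcons h false).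
    rewrite subr0; apply: F1 Hts _ _ _ _ _ => //.
      by rewrite upd_price_i eqxx.
    exact: thr_shift.
  case: (B' i h) Hne => // _.
  rewrite /utility; have [-> ->] := F3 Htd iA' B (rcons h false).
  rewrite subr0; apply: F2 Hts _ _ _ _ => //.
  by rewrite upd_price_i eqxx ltNge qd.
move: Hp Hp' => /= /andP [/eqP <- Hp] /andP [/eqP <- Hp'].
rewrite -cat_rcons => Hne.
case: m Hn Hp Hp' Hne => Hn Hp Hp' Hne.
  apply: IH1 Hn _ Hp Hp' Hne; exact: thr_shift.
apply: IH2 Hn _ Hp Hp' Hne; exact: thr_shift.
Qed.

End Proof.

Theorem lemma2p1 (N Item : finType) (R : realFieldType)
  (XB XP : N -> {set Item}) (T : mech N Item R) :
  generalized_ascending_auction XB XP T -> OSP T.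
Proof.
case=> _ [p0 /GAA_GAAP [P HP]] i.
exists (fun v w => P w <= v (XP i) - v (XB i)).
move=> v u B B' Hn Hon Hon' Hne.
apply: (OSPrel HP Hn _ Hon Hon' Hne).
by move=> w; rewrite /upd_profile eqxx.
Qed.
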